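(* Let $A=\mathrm{diag}(2,3,5)$ and $B=(1,2,1)$, and let $\mathrm{NT}=\{(x_1,x_2,x_3)\in\mathbb{R}^3 : BA^k(x_1,x_2,x_3)^T\ge 0 \text{ for all integers } k\ge 0\}=\{\vec{x}: 2^kx_1+2\cdot 3^kx_2+5^kx_3\ge 0\ \forall k\ge 0\}$, the non-termination set of the loop ''while $(x_1+2x_2+x_3\ge 0)$ $\{(x_1,x_2,x_3):=(2x_1,3x_2,5x_3)\}$''. Then $\mathrm{NT}$ is not a semi-algebraic set.
   Context: A semi-algebraic subset of $\mathbb{R}^n$ is a set of the form $\bigcup_{i=1}^s\bigcap_{j=1}^{r_i}\{\vec{x}\in\mathbb{R}^n: f_{i,j}(\vec{x})\,\triangleleft_{i,j}\,0\}$ with finitely many polynomials $f_{i,j}\in\mathbb{R}[x_1,\dots,x_n]$ and $\triangleleft_{i,j}\in\{<,=\}$. *)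

(* Defs.v *)
From Stdlib Require Import Reals List.
Open Scope R_scope.

Inductive poly3 : Type :=
| PConst : R -> poly3
| PX1 : poly3
| PX2 : poly3
| PX3 : poly3
| PAdd : poly3 -> poly3 -> poly3
| PMul : poly3 -> poly3 -> poly3.

Fixpoint peval (p : poly3) (x : R * R * R) : R :=
  match p with
  | PConst c => c
  | PX1 => fst (fst x)
  | PX2 => snd (fst x)
  | PX3 => snd x
  | PAdd p q => peval p x + peval q x
  | PMul p q => peval p x * peval q x
  end.

Inductive sign_rel : Type := RLt | REq.

Definition atom_holds (a : poly3 * sign_rel) (x : R * R * R) : Prop :=
  match snd a with
  | RLt => peval (fst a) x < 0
  | REq => peval (fst a) x = 0
  end.

Definition semialgebraic3 (S : R * R * R -> Prop) : Prop :=
  exists D : list (list (poly3 * sign_rel)),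
    forall x, S x <-> Exists (fun C => Forall (fun a => atom_holds a x) C) D.

Definition NT (x : R * R * R) : Prop :=
  let '(x1, x2, x3) := x in
  forall k : nat, 2 ^ k * x1 + 2 * 3 ^ k * x2 + 5 ^ k * x3 >= 0.

(* Main.v *)
Require Import Defs.
From Stdlib Require Import Reals List.
From Stdlib Require Import Lra Lia Classical Arith.
Open Scope R_scope.

Fixpoint evalL (l : list R) (x : R) : R :=
  match l with nil => 0 | a :: l' => a + x * evalL l' x end.

Fixpoint addL (l m : list R) : list R :=
  match l, m with
  | nil, _ => m
  | _, nil => l
  | a :: l', b :: m' => (a + b) :: addL l' m'
  end.

Lemma evalL_add l m x : evalL (addL l m) x = evalL l x + evalL m x.
Proof.
  revert m; induction l as [|a l IH]; intros m; simpl.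
  - lra.
  - destruct m as [|b m]; simpl. lra. rewrite IH. ring.
Qed.

Definition scal (a : R) (l : list R) := map (fun b => a * b) l.
Lemma evalL_scal a l x : evalL (scal a l) x = a * evalL l x.
Proof. induction l as [|b l IH]; simpl. ring. rewrite IH. ring. Qed.

Fixpoint mulL (l m : list R) : list R :=
  match l with nil => nil | a :: l' => addL (scal a m) (0 :: mulL l' m) end.
Lemma evalL_mul l m x : evalL (mulL l m) x = evalL l x * evalL m x.
Proof.
  induction l as [|a l IH]; simpl. ring.
  rewrite evalL_add, evalL_scal. simpl. rewrite IH. ring.
Qed.

Definition PolyF (g : R -> R) := exists l, forall x, g x = evalL l x.

Lemma PolyF_add g h : PolyF g -> PolyF h -> PolyF (fun x => g x + h x).
Proof. intros [l Hl] [m Hm]; exists (addL l m); intro x; rewrite evalL_add, Hl, Hm; auto. Qed.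
Lemma PolyF_mul g h : PolyF g -> PolyF h -> PolyF (fun x => g x * h x).
Proof. intros [l Hl] [m Hm]; exists (mulL l m); intro x; rewrite evalL_mul, Hl, Hm; auto. Qed.
Lemma PolyF_const c : PolyF (fun _ => c).
Proof. exists (c :: nil); intro; simpl; ring. Qed.
Lemma PolyF_affine a b : PolyF (fun x => a + b * x).
Proof. exists (a :: b :: nil); intro; simpl; ring. Qed.

Lemma evalL_cont l x : continuity_pt (evalL l) x.
Proof.
  induction l as [|a l IH]; simpl.
  - apply continuity_pt_const. intros u v; reflexivity.
  - apply continuity_pt_locally_ext with (a := 1) (f := (fct_cte a + id * evalL l)%F).
    + lra.
    + intros; reflexivity.
    + apply continuity_pt_plus. apply continuity_pt_const. intros u v; reflexivity.
      apply continuity_pt_mult. apply derivable_continuous_pt, derivable_pt_id. exact IH.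
Qed.

Lemma PolyF_cont g x : PolyF g -> continuity_pt g x.
Proof.
  intros [l Hl]. apply continuity_pt_locally_ext with (a := 1) (f := evalL l).
  lra. intros; symmetry; apply Hl. apply evalL_cont.
Qed.

Lemma cont_neg g x : continuity_pt g x -> g x < 0 ->
  exists d, d > 0 /\ forall y, Rabs (y - x) < d -> g y < 0.
Proof.
  intros Hc Hg. destruct (Hc (- g x)) as [d [Hd H]]. lra.
  exists d; split; auto. intros y Hy.
  destruct (Req_dec x y) as [<-|Hne]. auto.
  assert (H1 := H y (conj (conj I Hne) Hy)). simpl in H1. unfold Rdist in H1.
  apply Rabs_def2 in H1. lra.
Qed.

Lemma factor l r : exists q, (length q <= pred (length l))%nat /\
  forall x, evalL l x - evalL l r = (x - r) * evalL q x.
Proof.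
  induction l as [|a l IH].
  - exists nil; simpl; split; [lia| intros; ring].
  - destruct l as [|b l'].
    + exists nil; simpl; split; [lia| intros; ring].
    + destruct IH as [q [Hlen Hq]].
      exists (evalL (b :: l') r :: q). split. simpl in *; lia.
      intro x. assert (H := Hq x). simpl in H |- *.
      replace (x * (b + x * evalL l' x)) with
        (x * ((b + x * evalL l' x) - (b + r * evalL l' r)) + x * (b + r * evalL l' r)) by ring.
      rewrite H. ring.
Qed.

Lemma poly_inf_roots_aux n : forall l, (length l <= n)%nat ->
  (forall rs : list R, exists x, ~ In x rs /\ evalL l x = 0) -> forall x, evalL l x = 0.
Proof.
  induction n as [|n IH]; intros l Hl Hr x.
  - destruct l; simpl in *; [reflexivity| lia].
  - destruct (Hr nil) as [r [_ Hr0]].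
    destruct (factor l r) as [q [Hq Heq]].
    assert (Hq0 : forall y, evalL q y = 0).
    { apply IH. destruct l; simpl in *; lia.
      intros rs. destruct (Hr (r :: rs)) as [y [Hy Hy0]].
      exists y. split. intro; apply Hy; right; auto.
      assert (y <> r) by (intro; apply Hy; left; auto).
      specialize (Heq y). rewrite Hy0, Hr0 in Heq.
      destruct (Rmult_integral (y - r) (evalL q y)) as [H1|H1]; [lra|lra|exact H1]. }
    specialize (Heq x). rewrite Hq0, Hr0 in Heq. lra.
Qed.

Lemma avoid_list (v : nat -> R) K0
  (Hdec : forall n m, (K0 <= n)%nat -> (n < m)%nat -> v m < v n) (l : list R) :
  exists N, forall n, (N <= n)%nat -> ~ In (v n) l.
Proof.
  induction l as [|a l [N1 HN1]].
  - exists 0%nat; intros n _ H; destruct H.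
  - destruct (classic (exists n0, (K0 <= n0)%nat /\ v n0 = a)) as [[n0 [Hk Hn0]]|Hno].
    + exists (Nat.max N1 (S n0)). intros n Hn [H|H].
      * assert (v n < v n0) by (apply Hdec; lia). lra.
      * apply (HN1 n); [lia|auto].
    + exists (Nat.max N1 K0). intros n Hn [H|H].
      * apply Hno; exists n; split; [lia|auto].
      * apply (HN1 n); [lia|auto].
Qed.

Lemma Lzero h : PolyF h -> forall (v : nat -> R) K0,
  (forall n m, (K0 <= n)%nat -> (n < m)%nat -> v m < v n) ->
  (forall N, exists n, (N <= n)%nat /\ h (v n) = 0) -> forall x, h x = 0.
Proof.
  intros [l Hl] v K0 Hdec Hz x. rewrite Hl.
  apply (poly_inf_roots_aux (length l)); [lia|].
  intros rs. destruct (avoid_list v K0 Hdec rs) as [N HN].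
  destruct (Hz N) as [n [Hn Hn0]]. exists (v n). split. apply HN; auto.
  rewrite <- Hl; auto.
Qed.

Lemma dec_chain (v : nat -> R) K0 : (forall k, (K0 <= k)%nat -> v (S k) < v k) ->
  forall n m, (K0 <= n)%nat -> (n < m)%nat -> v m < v n.
Proof.
  intros H n m Hn Hm. induction m as [|m IH]. lia.
  destruct (Nat.eq_dec n m) as [->|Hne]. apply H; auto.
  assert (v m < v n) by (apply IH; lia). assert (v (S m) < v m) by (apply H; lia). lra.
Qed.

Lemma pigeon {A} (Ps : list A) (Q : A -> nat -> Prop) :
  (forall N, exists n, (N <= n)%nat /\ exists f, In f Ps /\ Q f n) ->
  exists f, In f Ps /\ forall N, exists n, (N <= n)%nat /\ Q f n.
Proof.
  induction Ps as [|a Ps IH]; intros H.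
  - destruct (H 0%nat) as [n [_ [f [[] _]]]].
  - destruct (classic (forall N, exists n, (N <= n)%nat /\ Q a n)) as [Ha|Ha].
    + exists a; split; [left; auto| auto].
    + apply not_all_ex_not in Ha. destruct Ha as [N0 HN0].
      destruct IH as [f [Hf HQ]].
      * intros N. destruct (H (Nat.max N N0)) as [n [Hn [f [[<-|Hf] HQ]]]].
        -- exfalso; apply HN0; exists n; split; [lia|auto].
        -- exists n; split; [lia|]; exists f; auto.
      * exists f; split; [right; auto| auto].
Qed.

Lemma PolyF_peval f X1 X2 X3 : PolyF X1 -> PolyF X2 -> PolyF X3 ->
  PolyF (fun t => peval f (X1 t, X2 t, X3 t)).
Proof.
  intros H1 H2 H3. induction f; simpl.
  - apply PolyF_const.
  - exact H1. - exact H2. - exact H3.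
  - apply PolyF_add; auto.
  - apply PolyF_mul; auto.
Qed.

Lemma PolyF_id : PolyF (fun x => x).
Proof. exists (0 :: 1 :: nil); intro; simpl; ring. Qed.

Definition th (n : nat) : R := 1/2 + 1 / (20 * (INR n + 1)).
Definition cc (k n : nat) : R := th n * 3 ^ k / 2 ^ k.
Definition ph (k n : nat) : R := (1 - th n) * 3 ^ k / 5 ^ k.

Lemma th_bounds n : 1/2 < th n <= 11/20.
Proof.
  unfold th. assert (H := pos_INR n).
  assert (0 < 1 / (20 * (INR n + 1))) by (apply Rdiv_lt_0_compat; lra).
  assert (1 / (20 * (INR n + 1)) <= 1/20).
  { unfold Rdiv. rewrite !Rmult_1_l. apply Rinv_le_contravar; lra. }
  lra.
Qed.

Lemma th_dec n : th (S n) < th n.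
Proof.
  unfold th. rewrite S_INR. assert (H := pos_INR n).
  unfold Rdiv. rewrite !Rmult_1_l. apply Rplus_lt_compat_l.
  apply Rinv_lt_contravar; nra.
Qed.

Lemma pow_ge_5_3 m : (9/20) * 5 ^ (m + 2) >= 3 ^ (m + 2).
Proof.
  induction m as [|m IH]. simpl; lra.
  replace (S m + 2)%nat with (S (m+2)) by lia. rewrite <- !tech_pow_Rmult.
  assert (0 < 3 ^ (m+2)) by (apply pow_lt; lra). nra.
Qed.

Lemma pow_ge_3_2 n : 4 * 3 ^ (n + 2) >= 9 * 2 ^ (n + 2).
Proof.
  induction n as [|n IH]. simpl; lra.
  replace (S n + 2)%nat with (S (n+2)) by lia. rewrite <- !tech_pow_Rmult.
  assert (0 < 2 ^ (n+2)) by (apply pow_lt; lra). nra.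
Qed.

Lemma NT_point k n : NT (cc k n, -1/2, ph k n).
Proof.
  unfold NT, cc, ph. intro j. destruct (th_bounds n) as [Ht1 Ht2].
  set (t := th n). fold t in Ht1, Ht2.
  assert (P2 : forall i, 0 < 2 ^ i) by (intro; apply pow_lt; lra).
  assert (P3 : forall i, 0 < 3 ^ i) by (intro; apply pow_lt; lra).
  assert (P5 : forall i, 0 < 5 ^ i) by (intro; apply pow_lt; lra).
  destruct (le_lt_dec k j) as [Hkj|Hjk].
  - replace j with (k + (j - k))%nat by lia. set (m := (j - k)%nat).
    rewrite !pow_add.
    replace (2 ^ k * 2 ^ m * (t * 3 ^ k / 2 ^ k) + 2 * (3 ^ k * 3 ^ m) * (-1/2) +
             5 ^ k * 5 ^ m * ((1 - t) * 3 ^ k / 5 ^ k))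
      with (3 ^ k * (t * 2 ^ m + (1 - t) * 5 ^ m - 3 ^ m))
      by (field; repeat split; apply pow_nonzero; lra).
    apply Rle_ge, Rmult_le_pos; [left; auto|].
    destruct m as [|[|m']].
    + simpl; lra.
    + simpl; lra.
    + replace (S (S m')) with (m' + 2)%nat by lia.
      assert (H := pow_ge_5_3 m'). assert (H2 := P2 (m' + 2)%nat).
      assert (H5 := P5 (m' + 2)%nat).
      assert (0 <= t * 2 ^ (m' + 2)) by (apply Rmult_le_pos; lra).
      assert (0 <= (1 - t - 9/20) * 5 ^ (m' + 2)) by (apply Rmult_le_pos; lra).
      lra.
  - replace k with (j + (k - j))%nat by lia. set (m := (k - j)%nat).
    assert (Hm : (1 <= m)%nat) by (unfold m; lia).
    rewrite !pow_add.
    replace (2 ^ j * (t * (3 ^ j * 3 ^ m) / (2 ^ j * 2 ^ m)) + 2 * 3 ^ j * (-1/2) +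
             5 ^ j * ((1 - t) * (3 ^ j * 3 ^ m) / (5 ^ j * 5 ^ m)))
      with (3 ^ j / (2 ^ m * 5 ^ m) * (t * 3 ^ m * 5 ^ m - 2 ^ m * 5 ^ m + (1 - t) * 3 ^ m * 2 ^ m))
      by (field; repeat split; apply pow_nonzero; lra).
    apply Rle_ge, Rmult_le_pos.
    + left; apply Rdiv_lt_0_compat; auto. apply Rmult_lt_0_compat; auto.
    + destruct m as [|[|m']]. lia. simpl; lra.
      replace (S (S m')) with (m' + 2)%nat by lia.
      assert (H := pow_ge_3_2 m'). assert (H2 := P2 (m' + 2)%nat).
      assert (H3 := P3 (m' + 2)%nat). assert (H5 := P5 (m' + 2)%nat).
      assert (t * 3 ^ (m' + 2) >= 2 ^ (m' + 2)) by nra.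
      assert (0 <= (1 - t) * 3 ^ (m' + 2) * 2 ^ (m' + 2)).
      { apply Rmult_le_pos; [apply Rmult_le_pos|]; lra. }
      nra.
Qed.

Lemma not_NT_below k n s : s < ph k n -> ~ NT (cc k n, -1/2, s).
Proof.
  unfold NT, cc, ph. intros Hs H. specialize (H k).
  assert (P2 : 0 < 2 ^ k) by (apply pow_lt; lra).
  assert (P5 : 0 < 5 ^ k) by (apply pow_lt; lra).
  replace (2 ^ k * (th n * 3 ^ k / 2 ^ k)) with (th n * 3 ^ k) in H by (field; apply pow_nonzero; lra).
  assert (H0 : 5 ^ k * s < 5 ^ k * ((1 - th n) * 3 ^ k / 5 ^ k)) by (apply Rmult_lt_compat_l; auto).
  replace (5 ^ k * ((1 - th n) * 3 ^ k / 5 ^ k)) with ((1 - th n) * 3 ^ k) in H0 by (field; apply pow_nonzero; lra).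
  lra.
Qed.

Lemma line_ph k n : (3 ^ k - 2 ^ k * cc k n) / 5 ^ k = ph k n.
Proof.
  unfold cc, ph. assert (0 < 2 ^ k) by (apply pow_lt; lra).
  assert (0 < 5 ^ k) by (apply pow_lt; lra). field; lra.
Qed.

Lemma pow_3_2_lin k : 2 * 3 ^ k >= 2 ^ k * (2 + INR k).
Proof.
  induction k as [|k IH]. simpl; lra.
  rewrite S_INR. simpl. assert (0 < 2 ^ k) by (apply pow_lt; lra).
  assert (Hk := pos_INR k). nra.
Qed.

Lemma vdec c0 : exists K0, forall k, (K0 <= k)%nat ->
  (3 ^ S k - 2 ^ S k * c0) / 5 ^ S k < (3 ^ k - 2 ^ k * c0) / 5 ^ k.
Proof.
  destruct (INR_unbounded (3 * c0)) as [K0 HK0]. exists K0. intros k Hk.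
  apply le_INR in Hk. assert (H := pow_3_2_lin k).
  assert (P2 : 0 < 2 ^ k) by (apply pow_lt; lra).
  assert (P5 : 0 < 5 ^ k) by (apply pow_lt; lra).
  assert (2 * 3 ^ k - 3 * 2 ^ k * c0 > 0) by nra.
  assert (E : (3 ^ k - 2 ^ k * c0) / 5 ^ k - (3 ^ S k - 2 ^ S k * c0) / 5 ^ S k
    = (2 * 3 ^ k - 3 * 2 ^ k * c0) / (5 * 5 ^ k)) by (simpl; field; lra).
  assert (0 < (2 * 3 ^ k - 3 * 2 ^ k * c0) / (5 * 5 ^ k)) by (apply Rdiv_lt_0_compat; lra).
  lra.
Qed.

Definition pt (c s : R) : R * R * R := (c, -1/2, s).

Lemma PolyF_vert f c : PolyF (fun s => peval f (pt c s)).
Proof. unfold pt. apply PolyF_peval; [apply PolyF_const|apply PolyF_const|apply PolyF_id]. Qed.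

Lemma clause_lemma c phi (C : list (poly3 * sign_rel)) :
  Forall (fun a => atom_holds a (pt c phi)) C ->
  (exists a, In a C /\ peval (fst a) (pt c phi) = 0 /\ exists s, peval (fst a) (pt c s) <> 0) \/
  (exists d, d > 0 /\ forall s, Rabs (s - phi) < d -> Forall (fun a => atom_holds a (pt c s)) C).
Proof.
  induction C as [|a C IH]; intros HF.
  - right. exists 1. split. lra. intros; constructor.
  - inversion HF as [|a' C' Ha HC]; subst.
    destruct (IH HC) as [[b [Hb Hb2]]|[d [Hd Hds]]].
    + left. exists b. split; [right; auto|auto].
    + destruct a as [p r]. unfold atom_holds in Ha; simpl in Ha. destruct r.
      * destruct (cont_neg (fun s => peval p (pt c s)) phi) as [d2 [Hd2 Hd2s]].
        apply PolyF_cont, PolyF_vert. exact Ha.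
        right. exists (Rmin d d2). split. apply Rmin_glb_lt; lra.
        intros s Hs. constructor.
        -- unfold atom_holds; simpl. apply Hd2s. eapply Rlt_le_trans; [exact Hs| apply Rmin_r].
        -- apply Hds. eapply Rlt_le_trans; [exact Hs| apply Rmin_l].
      * destruct (classic (forall s, peval p (pt c s) = 0)) as [Hall|Hn].
        -- right. exists d. split; auto. intros s Hs. constructor.
           unfold atom_holds; simpl. apply Hall. apply Hds; auto.
        -- left. exists (p, REq). split; [left; auto|]. simpl. split; auto.
           apply not_all_ex_not in Hn. exact Hn.
Qed.

Theorem proposition3 : ~ semialgebraic3 NT.
Proof.
  intros [D HD].
  set (Ps := flat_map (map fst) D).
  set (Zero := fun f k n => peval f (pt (cc k n) (ph k n)) = 0 /\
                 exists s, peval f (pt (cc k n) s) <> 0).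
  assert (SA : forall k n, exists f, In f Ps /\ Zero f k n).
  { intros k n. assert (H := NT_point k n). apply HD in H.
    apply Exists_exists in H. destruct H as [C [HC HF]].
    destruct (clause_lemma (cc k n) (ph k n) C HF) as [[a [Ha [Ha0 Has]]]|[d [Hd Hds]]].
    - exists (fst a). split.
      + unfold Ps. apply in_flat_map. exists C. split; auto. apply in_map; auto.
      + split; auto.
    - exfalso. apply (not_NT_below k n (ph k n - d/2)). lra.
      apply HD. apply Exists_exists. exists C. split; auto.
      apply Hds. rewrite Rabs_left; lra. }
  set (g := fun f k c => peval f (pt c ((3 ^ k - 2 ^ k * c) / 5 ^ k))).
  set (W := fun f k => (forall c, g f k c = 0) /\ exists n s, peval f (pt (cc k n) s) <> 0).
  assert (SB : forall k, exists f, In f Ps /\ W f k).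
  { intro k. destruct (pigeon Ps (fun f n => Zero f k n)) as [f [Hf HZ]].
    - intro N. exists N. split; auto.
    - exists f. split; auto. split.
      + apply (Lzero (g f k)) with (v := cc k) (K0 := 0%nat).
        * unfold g, pt. apply PolyF_peval. apply PolyF_id. apply PolyF_const.
          exists ((3 ^ k / 5 ^ k) :: (- (2 ^ k / 5 ^ k)) :: nil). intro x. simpl.
          field. apply pow_nonzero; lra.
        * apply dec_chain. intros k' _. unfold cc.
          assert (0 < 3 ^ k / 2 ^ k) by (apply Rdiv_lt_0_compat; apply pow_lt; lra).
          assert (Htd := th_dec k').
          unfold Rdiv in *. rewrite !Rmult_assoc. apply Rmult_lt_compat_r; auto.
        * intro N. destruct (HZ N) as [n [Hn [Hz _]]]. exists n. split; auto.
          unfold g. rewrite line_ph. exact Hz.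
      + destruct (HZ 0%nat) as [n [_ [_ Hs]]]. exists n; exact Hs. }
  destruct (pigeon Ps W) as [f [Hf HW]].
  { intro N. exists N. split; auto. }
  destruct (HW 0%nat) as [k0 [_ [_ [n0 [s0 Hs0]]]]].
  set (c0 := cc k0 n0).
  destruct (vdec c0) as [K0 HK0].
  apply Hs0.
  apply (Lzero (fun s => peval f (pt c0 s))) with
     (v := fun k => (3 ^ k - 2 ^ k * c0) / 5 ^ k) (K0 := K0).
  - apply PolyF_vert.
  - apply dec_chain. exact HK0.
  - intro N. destruct (HW N) as [k [Hk [Hg _]]]. exists k. split; auto.
    apply Hg.
Qed.
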